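(* Assume $0<\nu<1$, $\mathbf{x}_E(t_0)\neq\mathbf{x}_P(t_0)$, $\delta>0$, and the pursuer uses the law $\mathbf{v}_P=\mathbf{z}_P/\|\mathbf{z}_P\|$ with $\mathbf{z}_P(t)=(R_{\mathcal C}-R_{\mathcal A}(t))\,\mathbf{r}(t)/\|\mathbf{r}(t)\|+\nu\mathbf{y}(t)$. Then for every admissible evader control and every $t>t_0$ (up to capture), $\|\mathbf{r}(t)\|<\|\mathbf{r}(t_0)\|$. In particular, if the pursuer can sense the evader whenever their distance is at most $\rho$, with $\rho\ge\|\mathbf{r}(t_0)\|$, then the evader remains within sensing range until capture.
   Context: Setting (simple-motion pursuit–evasion in the plane). An evader and a pursuer have positions $\mathbf{x}_E(t),\mathbf{x}_P(t)\in\mathbb R^2$ with dynamics $\dot{\mathbf{x}}_E=\mathbf{v}_E$, $\dot{\mathbf{x}}_P=\mathbf{v}_P$, where $\|\mathbf{v}_E\|\le\nu$, $\|\mathbf{v}_P\|\le 1$, $0\le\nu<1$. The game starts at $t_0$ and ends at capture, the first time $\mathbf{x}_P=\mathbf{x}_E$. Set $\alpha=1/(1-\nu^2)$, $\gamma=\nu\alpha$, $\beta=\nu^2\alpha$, $\mathbf{r}=\mathbf{x}_E-\mathbf{x}_P$. The Apollonius disc $\mathcal A(t)$ is the closed disc with center $\mathbf{x}_{\mathcal A}(t)=\alpha\mathbf{x}_E(t)-\beta\mathbf{x}_P(t)$ and radius $R_{\mathcal A}(t)=\gamma\|\mathbf{r}(t)\|$. Given $\delta>0$, $\mathcal C$ is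 the closed disc with center $\mathbf{x}_{\mathcal C}=\mathbf{x}_{\mathcal A}(t_0)$ and radius $R_{\mathcal C}=R_{\mathcal A}(t_0)+\delta$; $\mathbf{y}(t)=\mathbf{x}_{\mathcal A}(t)-\mathbf{x}_{\mathcal C}$. *)

(* Defs.v *)
From HB Require Import structures.
From mathcomp Require Import all_boot all_order all_algebra.
From mathcomp Require Import all_classical all_reals all_analysis.
Set Implicit Arguments. Unset Strict Implicit. Unset Printing Implicit Defensive.
Import Order.TTheory GRing.Theory Num.Theory.
Import numFieldNormedType.Exports.
Local Open Scope classical_set_scope.
Local Open Scope ring_scope.

Section Pursuit.
Variable R : realType.

Definition enorm (p : R * R) : R := Num.sqrt (p.1 ^+ 2 + p.2 ^+ 2).
Definition psub (p q : R * R) : R * R := (p.1 - q.1, p.2 - q.2).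

Definition alpha (nu : R) : R := (1 - nu ^+ 2)^-1.
Definition gamma (nu : R) : R := nu * alpha nu.
Definition beta (nu : R) : R := nu ^+ 2 * alpha nu.

Definition apollo_center (nu : R) (xE xP : R * R) : R * R :=
  (alpha nu * xE.1 - beta nu * xP.1, alpha nu * xE.2 - beta nu * xP.2).
Definition apollo_radius (nu : R) (xE xP : R * R) : R :=
  gamma nu * enorm (psub xE xP).

Definition zP (nu delta : R) (xE0 xP0 xE xP : R * R) : R * R :=
  let RC := apollo_radius nu xE0 xP0 + delta in
  let r := psub xE xP in
  let y := psub (apollo_center nu xE xP) (apollo_center nu xE0 xP0) in
  let c := (RC - apollo_radius nu xE xP) / enorm r in
  (c * r.1 + nu * y.1, c * r.2 + nu * y.2).

Definition vP_law (nu delta : R) (xE0 xP0 xE xP : R * R) : R * R :=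
  let z := zP nu delta xE0 xP0 xE xP in (z.1 / enorm z, z.2 / enorm z).

Definition integral_traj (x v : R -> R * R) (t0 t : R) : Prop :=
  (x t).1 = (x t0).1 + \int[@lebesgue_measure R]_(s in `[t0, t]) (v s).1 /\
  (x t).2 = (x t0).2 + \int[@lebesgue_measure R]_(s in `[t0, t]) (v s).2.

End Pursuit.

(* Main.v *)
Require Import Defs.
From HB Require Import structures.
From mathcomp Require Import all_boot all_order all_algebra.
From mathcomp Require Import all_classical all_reals all_analysis.
From mathcomp Require Import ring lra.
Import Order.TTheory GRing.Theory Num.Theory.
Import numFieldNormedType.Exports.
Local Open Scope classical_set_scope.
Local Open Scope ring_scope.
Module Sx.

Set Implicit Arguments. Unset Strict Implicit. Unset Printing Implicit Defensive.

Section Vec.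
Variable R : realType.
Implicit Types p q : R * R.

Definition dot p q : R := p.1 * q.1 + p.2 * q.2.

Lemma enorm_ge0 p : 0 <= enorm p.
Proof. exact: sqrtr_ge0. Qed.

Lemma enorm_sq p : enorm p ^+ 2 = p.1 ^+ 2 + p.2 ^+ 2.
Proof. by rewrite sqr_sqrtr // addr_ge0 // sqr_ge0. Qed.

Lemma dot_self p : dot p p = enorm p ^+ 2.
Proof. by rewrite enorm_sq /dot !expr2. Qed.

Lemma cs p q : dot p q <= enorm p * enorm q.
Proof.
rewrite /enorm -sqrtrM ?addr_ge0 ?sqr_ge0 //.
apply: (le_trans (ler_norm _)).
rewrite -(sqrtr_sqr (dot p q)) ler_sqrt ?mulr_ge0 ?addr_ge0 ?sqr_ge0 //.
rewrite /dot; set a := p.1; set b := p.2; set c := q.1; set d := q.2.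
have h : 0 <= (a * d - b * c) ^+ 2 by apply: sqr_ge0.
nra.
Qed.

Lemma cs_abs p q : `|dot p q| <= enorm p * enorm q.
Proof.
have h1 := cs p q; have h2 := cs (- p.1, - p.2) q.
have e : enorm (- p.1, - p.2) = enorm p by rewrite /enorm /= !sqrrN.
rewrite e /dot /= in h2; rewrite /dot in h1 *.
rewrite ler_norml; apply/andP; split; lra.
Qed.

Lemma enorm_eq0 p : (enorm p == 0) = (p == (0, 0)).
Proof.
rewrite /enorm sqrtr_eq0 le_eqVlt ltNge addr_ge0 ?sqr_ge0 // orbF.
rewrite paddr_eq0 ?sqr_ge0 // !sqrf_eq0.
by case: p => a b; rewrite xpair_eqE.
Qed.

Lemma le_enorm p M : 0 <= M -> (forall q, dot q p <= enorm q * M) -> enorm p <= M.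
Proof.
move=> M0 h; have := h p; rewrite dot_self expr2.
have [->|pn] := eqVneq (enorm p) 0; first by [].
have pp : 0 < enorm p by rewrite lt_def pn enorm_ge0.
by rewrite ler_pM2l.
Qed.
Notation mu := (@lebesgue_measure R).



Lemma bnd_int (A : set R) (f : R -> R) (B : R) : measurable A -> (mu A < +oo)%E ->
  measurable_fun A f -> (forall x, A x -> `|f x| <= B) -> mu.-integrable A (EFin \o f).
Proof.
move=> mA Afin mf fB; apply: measurable_bounded_integrable => //.
rewrite /bounded_near; near=> M => x Ax /=.
apply: (le_trans (fB x Ax)); near: M; exact: nbhs_pinfty_ge (num_real _).
Unshelve. all: by end_near. Qed.

Lemma itv_fin (a b : R) : (mu `[a, b] < +oo)%E.
Proof. by rewrite lebesgue_measure_itv /=; case: ifP => _; rewrite ?ltry. Qed.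

Lemma incr_le (t0 s u M B : R) (f : R -> R) :
  t0 <= s -> s < u -> measurable_fun `[t0, u] f ->
  (forall x, t0 <= x <= u -> `|f x| <= B) ->
  (forall x, s < x <= u -> f x <= M) ->
  \int[mu]_(x in `[t0, u]) f x - \int[mu]_(x in `[t0, s]) f x <= M * (u - s).
Proof.
move=> t0s su mf fB fM.
have If : mu.-integrable `[t0, u] (EFin \o f).
  apply: (@bnd_int _ f B).
  - exact: measurable_itv.
  - exact: itv_fin.
  - exact: mf.
  - by move=> x; rewrite /= in_itv /=; apply: fB.
rewrite Rintegral_itvB //; last by rewrite bnd_simp ltW.
have sub : `]s, u] `<=` `[t0, u].
  by apply: subset_itvr; rewrite bnd_simp.
have Ifs : mu.-integrable `]s, u] (EFin \o f) by apply: integrableS If.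
have IM : mu.-integrable `]s, u] (EFin \o (fun=> M)).
  apply: (@bnd_int _ _ `|M|).
  - exact: measurable_itv.
  - by rewrite lebesgue_measure_itv /=; case: ifP => _; rewrite ?ltry.
  - exact: measurable_cst.
  - by [].
apply: (le_trans (le_Rintegral _ Ifs IM _)).
  exact: measurable_itv.
  by move=> x; rewrite /= in_itv /= => /andP[h1 h2]; apply: fM; rewrite h1 h2.
rewrite Rintegral_cst; last exact: measurable_itv.
have mE : mu `]s, u] = (u - s)%:E.
  by rewrite lebesgue_measure_itv /= lte_fin su /= EFinB.
rewrite -[u - s]/(fine (u - s)%:E) -mE; exact: lexx.
Qed.


Lemma meas_lin (A : set R) (a b : R) (f g : R -> R) :
  measurable A -> measurable_fun A f -> measurable_fun A g ->
  measurable_fun A (fun x => a * f x + b * g x).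
Proof.
move=> mA mf mg.
apply: (@measurable_realfun.measurable_funD _ _ _ A (fun x => a * f x) (fun x => b * g x)).
- by apply: (@measurable_realfun.measurable_funM _ _ _ A (fun=> a) f) => //; exact: measurable_cst.
- by apply: (@measurable_realfun.measurable_funM _ _ _ A (fun=> b) g) => //; exact: measurable_cst.
Qed.

Lemma bnd_int_itv (t0 u B : R) (f : R -> R) : measurable_fun `[t0, u] f ->
  (forall x, t0 <= x <= u -> `|f x| <= B) -> mu.-integrable `[t0, u] (EFin \o f).
Proof.
move=> mf fB; apply: (@bnd_int _ f B).
- exact: measurable_itv.
- exact: itv_fin.
- exact: mf.
- by move=> x; rewrite /= in_itv /=; apply: fB.
Qed.

Lemma int_lin (t0 u a b B : R) (f g : R -> R) :
  measurable_fun `[t0, u] f -> measurable_fun `[t0, u] g ->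
  (forall x, t0 <= x <= u -> `|f x| <= B) ->
  (forall x, t0 <= x <= u -> `|g x| <= B) ->
  \int[mu]_(x in `[t0, u]) (a * f x + b * g x) =
  a * \int[mu]_(x in `[t0, u]) f x + b * \int[mu]_(x in `[t0, u]) g x.
Proof.
move=> mf mg fB gB.
have mI : measurable (`[t0, u] : set R) by exact: measurable_itv.
have If := @bnd_int_itv _ _ _ _ mf fB.
have Ig := @bnd_int_itv _ _ _ _ mg gB.
have Iaf : mu.-integrable `[t0, u] (EFin \o (fun x => a * f x)).
  apply: (@bnd_int_itv _ _ (`|a| * B) _).
    by apply: (@measurable_realfun.measurable_funM _ _ _ _ (fun=> a) f) => //; exact: measurable_cst.
  move=> x h; rewrite normrM ler_wpM2l //; exact: fB.
have Ibg : mu.-integrable `[t0, u] (EFin \o (fun x => b * g x)).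
  apply: (@bnd_int_itv _ _ (`|b| * B) _).
    by apply: (@measurable_realfun.measurable_funM _ _ _ _ (fun=> b) g) => //; exact: measurable_cst.
  move=> x h; rewrite normrM ler_wpM2l //; exact: gB.
by rewrite RintegralD // RintegralZl // RintegralZl.
Qed.

Lemma comp1_le p : `|p.1| <= enorm p.
Proof.
rewrite /enorm -sqrtr_sqr ler_sqrt ?addr_ge0 ?sqr_ge0 // lerDl sqr_ge0 //.
Qed.

Lemma comp2_le p : `|p.2| <= enorm p.
Proof.
rewrite /enorm -sqrtr_sqr ler_sqrt ?addr_ge0 ?sqr_ge0 // lerDr sqr_ge0 //.
Qed.

Lemma incr_dot (t0 s u M B : R) (x v : R -> R * R) (p : R * R) :
  t0 <= s -> s < u ->
  integral_traj x v t0 s -> integral_traj x v t0 u ->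
  measurable_fun `[t0, u] (fun y => (v y).1) ->
  measurable_fun `[t0, u] (fun y => (v y).2) ->
  (forall y, t0 <= y <= u -> enorm (v y) <= B) ->
  (forall y, s < y <= u -> dot p (v y) <= M) ->
  dot p (psub (x u) (x s)) <= M * (u - s).
Proof.
move=> t0s su [hs1 hs2] [hu1 hu2] m1 m2 vB vM.
have sub : `[t0, s] `<=` `[t0, u] by apply: subset_itvl; rewrite bnd_simp ltW.
have m1s : measurable_fun `[t0, s] (fun y => (v y).1).
  by apply: (measurable_funS _ sub m1); exact: measurable_itv.
have m2s : measurable_fun `[t0, s] (fun y => (v y).2).
  by apply: (measurable_funS _ sub m2); exact: measurable_itv.
have b1 : forall y, t0 <= y <= u -> `|(v y).1| <= B.
  by move=> y h; apply: le_trans (comp1_le _) (vB y h).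
have b2 : forall y, t0 <= y <= u -> `|(v y).2| <= B.
  by move=> y h; apply: le_trans (comp2_le _) (vB y h).
have b1s : forall y, t0 <= y <= s -> `|(v y).1| <= B.
  move=> y /andP[h1 h2]; apply: b1; rewrite h1 /=; apply: le_trans h2 (ltW su).
have b2s : forall y, t0 <= y <= s -> `|(v y).2| <= B.
  move=> y /andP[h1 h2]; apply: b2; rewrite h1 /=; apply: le_trans h2 (ltW su).
rewrite /dot /psub /= hu1 hs1 hu2 hs2.
have e1 := @int_lin t0 u p.1 p.2 B _ _ m1 m2 b1 b2.
have e2 := @int_lin t0 s p.1 p.2 B _ _ m1s m2s b1s b2s.
have key : \int[mu]_(y in `[t0, u]) (p.1 * (v y).1 + p.2 * (v y).2) -
    \int[mu]_(y in `[t0, s]) (p.1 * (v y).1 + p.2 * (v y).2) <= M * (u - s).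
  apply: (@incr_le t0 s u M (enorm p * B) (fun y => p.1 * (v y).1 + p.2 * (v y).2)) => //.
  - exact: (meas_lin _ _ (measurable_itv _) m1 m2).
  - move=> y h; apply: le_trans (cs_abs p (v y)) _.
    by apply: ler_wpM2l; [exact: enorm_ge0 | exact: vB].
rewrite e1 e2 in key; lra.
Qed.

Definition vadd p q : R * R := (p.1 + q.1, p.2 + q.2).
Definition vscl (c : R) p : R * R := (c * p.1, c * p.2).

Lemma enorm_leP p X : 0 <= X -> (enorm p <= X) = (p.1 ^+ 2 + p.2 ^+ 2 <= X ^+ 2).
Proof.
move=> X0; rewrite -enorm_sq.
by rewrite ler_pXn2r // ?nnegrE ?enorm_ge0.
Qed.

Lemma enorm_add p q : enorm (vadd p q) <= enorm p + enorm q.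
Proof.
rewrite enorm_leP ?addr_ge0 ?enorm_ge0 //.
have h := cs p q; have hp := enorm_sq p; have hq := enorm_sq q.
rewrite /dot in h; rewrite /vadd /=.
have -> : (enorm p + enorm q) ^+ 2 = enorm p ^+ 2 + 2 * (enorm p * enorm q) + enorm q ^+ 2 by ring.
rewrite hp hq; nra.
Qed.

Lemma enorm_scl c p : enorm (vscl c p) = `|c| * enorm p.
Proof.
rewrite /enorm /vscl /= !exprMn -mulrDr sqrtrM ?sqr_ge0 //.
by rewrite sqrtr_sqr.
Qed.

Lemma enorm_psub p q : psub p q = vadd p (vscl (-1) q).
Proof. by rewrite /psub /vadd /vscl /=; congr pair; ring. Qed.

Lemma enorm_lin a b p q A B : enorm p <= A -> enorm q <= B ->
  enorm (vadd (vscl a p) (vscl b q)) <= `|a| * A + `|b| * B.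
Proof.
move=> pA qB; apply: le_trans (enorm_add _ _) _.
rewrite !enorm_scl; apply: lerD; apply: ler_wpM2l => //.
Qed.

Definition nrm p : R * R := (p.1 / enorm p, p.2 / enorm p).

Lemma enorm_nrm p : enorm (nrm p) <= 1.
Proof.
have [e0|ne0] := eqVneq (enorm p) 0.
  by rewrite /nrm e0 !invr0 !mulr0 /enorm /= expr2 !mulr0 addr0 sqrtr0.
rewrite enorm_leP // /nrm /= !expr_div_n -mulrDl -enorm_sq mulfV //.
  by rewrite expr1n.
by rewrite expf_neq0.
Qed.

Lemma dot_nrm p : dot p (nrm p) = enorm p.
Proof.
have [e0|ne0] := eqVneq (enorm p) 0.
  by rewrite /dot /nrm e0 !invr0 !mulr0 addr0.
rewrite /dot /nrm /= !mulrA -mulrDl -!expr2 -enorm_sq.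
by rewrite expr2 mulfK.
Qed.

Lemma dotC p q : dot p q = dot q p.
Proof. by rewrite /dot mulrC [p.2 * _]mulrC. Qed.

Lemma dot_nrm_ge q z : enorm q - 2 * enorm (psub q z) <= dot q (nrm z).
Proof.
have e1 : dot q (nrm z) = dot z (nrm z) + dot (psub q z) (nrm z).
  by rewrite /dot /psub /=; ring.
rewrite e1 dot_nrm.
have h1 := cs_abs (psub q z) (nrm z).
have h2 := enorm_nrm z.
have h3 : enorm q <= enorm z + enorm (psub q z).
  have e : vadd z (psub q z) = q.
    by clear; case: q => a b; rewrite /vadd /psub /=; congr pair; ring.
  by have := enorm_add z (psub q z); rewrite e.
have h4 := enorm_ge0 (psub q z).
have h5 : enorm (psub q z) * enorm (nrm z) <= enorm (psub q z).
  by rewrite -{2}(mulr1 (enorm (psub q z))); apply: ler_wpM2l.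
rewrite ler_norml in h1; case/andP: h1 => h1 _.
lra.
Qed.


Lemma psub_sym p q : enorm (psub p q) = enorm (psub q p).
Proof. by rewrite /enorm /psub /=; congr Num.sqrt; ring. Qed.

Lemma rev_tri p q : enorm p - enorm q <= enorm (psub p q).
Proof.
have e : vadd q (psub p q) = p by case: p => a b; rewrite /vadd /psub /=; congr pair; ring.
have := enorm_add q (psub p q); rewrite e; lra.
Qed.

Lemma comp_eq0 p : enorm p = 0 -> p.1 = 0 /\ p.2 = 0.
Proof. by move/eqP; rewrite enorm_eq0; case: p => a b /eqP [-> ->]. Qed.

Lemma nrm_lip r r' : 0 < enorm r ->
  enorm (psub (nrm r') (nrm r)) <= 2 * enorm (psub r' r) / enorm r.
Proof.
move=> rp.
have [e0|ne0] := eqVneq (enorm r') 0.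
  have [h1 h2] := comp_eq0 e0.
  have -> : psub (nrm r') (nrm r) = vscl (-1) (nrm r).
    by rewrite /psub /nrm /vscl e0 h1 h2 /= !mul0r; congr pair; ring.
  have -> : psub r' r = vscl (-1) r.
    by rewrite /psub /vscl h1 h2 /=; congr pair; ring.
  rewrite !enorm_scl normrN normr1 !mul1r -mulrA mulfV ?gt_eqF // mulr1.
  by apply: le_trans (enorm_nrm r) _; lra.
have r'p : 0 < enorm r' by rewrite lt_def ne0 enorm_ge0.
have -> : psub (nrm r') (nrm r) = vadd (vscl (enorm r)^-1 (psub r' r))
     (vscl ((enorm r - enorm r') / enorm r) (nrm r')).
  rewrite /psub /nrm /vadd /vscl /=; congr pair; field;
  by apply/andP; split; rewrite gt_eqF.
apply: le_trans (enorm_add _ _) _; rewrite !enorm_scl.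
have h1 := enorm_nrm r'.
have h2 : `|enorm r - enorm r'| <= enorm (psub r' r).
  rewrite ler_norml; apply/andP; split.
    by have := rev_tri r' r; lra.
  by have := rev_tri r r'; rewrite psub_sym; lra.
have ir0 : 0 <= (enorm r)^-1 by rewrite invr_ge0 enorm_ge0.
rewrite normrM (ger0_norm ir0).
have hd := enorm_ge0 (psub r' r).
have hx := normr_ge0 (enorm r - enorm r').
have hn := enorm_ge0 (nrm r').
set X := `|_| in h2 hx *; set D := enorm (psub r' r) in h2 hd *.
set nn := enorm (nrm r') in h1 hn *; set ir := (enorm r)^-1 in ir0 *.
have e1 : X * nn <= D by nra.
have e2 : ir * (X * nn) <= ir * D by apply: ler_wpM2l.
rewrite /D mulrAC -/D. nra.
Qed.


Lemma lip (t0 s u B : R) (x v : R -> R * R) :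
  t0 <= s -> s < u ->
  integral_traj x v t0 s -> integral_traj x v t0 u ->
  measurable_fun `[t0, u] (fun y => (v y).1) ->
  measurable_fun `[t0, u] (fun y => (v y).2) ->
  (forall y, t0 <= y <= u -> enorm (v y) <= B) -> 0 <= B ->
  enorm (psub (x u) (x s)) <= B * (u - s).
Proof.
move=> t0s su hs hu m1 m2 vB B0.
apply: le_enorm; first by apply: mulr_ge0 => //; lra.
move=> q; rewrite mulrA.
apply: (incr_dot t0s su hs hu m1 m2 vB) => y hy.
apply: le_trans (cs q (v y)) _; apply: ler_wpM2l; first exact: enorm_ge0.
by apply: vB; case/andP: hy => h1 h2; rewrite h2 andbT; apply: le_trans t0s (ltW h1).
Qed.

Lemma incr_dot_ge (t0 s u m B : R) (x v : R -> R * R) (p : R * R) :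
  t0 <= s -> s < u ->
  integral_traj x v t0 s -> integral_traj x v t0 u ->
  measurable_fun `[t0, u] (fun y => (v y).1) ->
  measurable_fun `[t0, u] (fun y => (v y).2) ->
  (forall y, t0 <= y <= u -> enorm (v y) <= B) ->
  (forall y, s < y <= u -> m <= dot p (v y)) ->
  m * (u - s) <= dot p (psub (x u) (x s)).
Proof.
move=> t0s su hs hu m1 m2 vB vm.
have e : forall w, dot (vscl (-1) p) w = - dot p w by move=> w; rewrite /dot /vscl /=; ring.
have := @incr_dot t0 s u (- m) B x v (vscl (-1) p) t0s su hs hu m1 m2 vB.
rewrite e => H.
have : - dot p (psub (x u) (x s)) <= - m * (u - s).
  apply: H => y hy; rewrite e lerN2; exact: vm.
lra.
Qed.

End Vec.

Lemma core (R : realType) (a a' rho rho' ga al nu h K np nq Ly Lrd dd ysq y'sq dy2 pW qQ c RC be : R) :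
  0 < rho -> 0 <= rho' -> 0 <= ga -> 0 <= al -> 0 <= h -> 0 <= a -> 0 <= dd ->
  y'sq = ysq + 2 * Ly + dy2 ->
  rho' ^+ 2 = rho ^+ 2 + 2 * Lrd + dd ->
  a = RC - ga * rho -> a' = RC - ga * rho' ->
  c = a / rho ->
  2 * Ly + 2 * ga * c * Lrd = 2 * al * pW - 2 * ga * qQ ->
  pW <= nu * np * h -> (nq - 2 * K * h) * h <= qQ -> al * nu = ga ->
  dy2 <= (al + be) ^+ 2 * h ^+ 2 -> dd <= (1 + nu) ^+ 2 * h ^+ 2 ->
  Lrd <= rho * ((1 + nu) * h) ->
  ga * (2 * rho * ((1 + nu) * h) + (1 + nu) ^+ 2 * h ^+ 2) / (2 * rho) <= a ->
  y'sq - a' ^+ 2 <= ysq - a ^+ 2 + 2 * ga * h * (np - nq)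
     + (4 * ga * K + (al + be) ^+ 2 + a * ga * (1 + nu) ^+ 2 / rho) * h ^+ 2
  /\ 0 <= a'.
Proof.
move=> rp r'p gap al0 hp ap ddp ey er ea ea' ec eL hW hQ ean hdy hdd hLrd hyp.
have rne : rho != 0 by rewrite gt_eqF.
have hr2 : 2 * rho * rho' <= rho ^+ 2 + rho' ^+ 2.
  have := sqr_ge0 (rho - rho'); rewrite !expr2; lra.
set D := 2 * Lrd + dd.
have eD : rho' ^+ 2 = rho ^+ 2 + D by rewrite er /D; ring.
have hr' : rho' <= rho + D / (2 * rho).
  have -> : rho + D / (2 * rho) = (rho ^+ 2 + rho' ^+ 2) / (2 * rho).
    by rewrite eD; field.
  rewrite ler_pdivlMr; last by lra.
  lra.
have Yle : a - ga * D / (2 * rho) <= a'.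
  rewrite ea ea'.
  have : ga * rho' <= ga * (rho + D / (2 * rho)) by apply: ler_wpM2l.
  rewrite -mulrA; lra.
have Dle : D <= 2 * rho * ((1 + nu) * h) + (1 + nu) ^+ 2 * h ^+ 2 by rewrite /D; lra.
have Y0 : 0 <= a - ga * D / (2 * rho).
  suff : ga * D / (2 * rho) <= ga * (2 * rho * ((1 + nu) * h) + (1 + nu) ^+ 2 * h ^+ 2) / (2 * rho) by lra.
  apply: ler_wpM2r; first by rewrite invr_ge0; lra.
  by apply: ler_wpM2l.
split; last by lra.
have a'sq : (a - ga * D / (2 * rho)) ^+ 2 <= a' ^+ 2.
  by rewrite ler_pXn2r // ?nnegrE; lra.
have a'sq2 : a ^+ 2 - a * ga * D / rho <= (a - ga * D / (2 * rho)) ^+ 2.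
  have -> : (a - ga * D / (2 * rho)) ^+ 2 = a ^+ 2 - a * ga * D / rho + (ga * D / (2 * rho)) ^+ 2.
    by field.
  have := sqr_ge0 (ga * D / (2 * rho)); lra.
have eaD : a * ga * D / rho = 2 * ga * c * Lrd + a * ga * dd / rho.
  by rewrite ec /D; field.
have hdd2 : a * ga * dd / rho <= a * ga * (1 + nu) ^+ 2 / rho * h ^+ 2.
  have -> : a * ga * (1 + nu) ^+ 2 / rho * h ^+ 2 = a * ga * ((1 + nu) ^+ 2 * h ^+ 2) / rho.
    by field.
  apply: ler_wpM2r; first by rewrite invr_ge0; lra.
  by apply: ler_wpM2l => //; apply: mulr_ge0.
have hW2 : 2 * al * pW <= 2 * ga * h * np.
  have : al * pW <= al * (nu * np * h) by apply: ler_wpM2l.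
  rewrite -ean; lra.
have hQ2 : - 2 * ga * qQ <= - 2 * ga * h * nq + 4 * ga * K * h ^+ 2.
  have : ga * ((nq - 2 * K * h) * h) <= ga * qQ by apply: ler_wpM2l.
  rewrite expr2; lra.
rewrite !mulrDl; lra.
Qed.

Lemma real_ind (R : realType) (t0 T : R) (Pr : R -> Prop) : t0 <= T ->
  Pr t0 ->
  (forall s, t0 <= s < T -> Pr s ->
     exists2 eta, 0 < eta & forall u, s < u <= T -> u - s < eta -> Pr u) ->
  (forall s, t0 < s <= T -> (forall u, t0 <= u < s -> Pr u) -> Pr s) ->
  forall t, t0 <= t <= T -> Pr t.
Proof.
move=> t0T P0 ext cl.
pose S := [set x | t0 <= x <= T /\ forall u, t0 <= u <= x -> Pr u].
have S0 : S t0.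
  split; first by rewrite lexx t0T.
  by move=> u /andP[h1 h2]; have -> : u = t0 by apply/eqP; rewrite eq_le h1 h2.
have ne : S !=set0 by exists t0.
have ubS : ubound S T by move=> x [/andP[_ ->]].
have hub : has_ubound S by exists T.
set c := sup S.
have t0c : t0 <= c by apply: ub_le_sup.
have cT : c <= T by apply: ge_sup.
have below : forall u, t0 <= u < c -> Pr u.
  move=> u /andP[h1 h2].
  have [x [_ Px] ux] := sup_gt ne h2.
  by apply: Px; rewrite h1 ltW.
have Pc : Pr c.
  have [e|ne0] := eqVneq c t0; first by rewrite e.
  apply: cl => //; rewrite cT andbT lt_def ne0 t0c //.
have Sc : S c.
  split; first by rewrite t0c cT.
  move=> u /andP[h1 h2]; have [e|lt] := eqVneq u c; first by rewrite e.
  by apply: below; rewrite h1 lt_def eq_sym lt h2.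
have [eT|ltT] := eqVneq c T.
  move=> t /andP[h1 h2]; case: Sc => _ H; apply: H; rewrite h1 /=; rewrite eT //.
have cT' : c < T by rewrite lt_def eq_sym ltT cT.
have [eta eta0 Heta] : exists2 eta, 0 < eta & forall u, c < u <= T -> u - c < eta -> Pr u.
  by apply: ext => //; rewrite t0c cT'.
pose x := Num.min (c + eta / 2) T.
have cx : c < x.
  rewrite /x lt_min cT' andbT; lra.
have Sx : S x.
  split.
    apply/andP; split; first by apply: le_trans t0c (ltW cx).
    by rewrite /x ge_min lexx orbT.
  move=> u /andP[h1 h2].
  have [uc|cu] := leP u c.
    by case: Sc => _ H; apply: H; rewrite h1 uc.
  apply: Heta; first by rewrite cu /=; apply: le_trans h2 _; rewrite /x ge_min lexx orbT.
  have : x <= c + eta / 2 by rewrite /x ge_min lexx.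
  lra.
have := ubS x Sx.
have : x <= c by apply: ub_le_sup.
lra.
Qed.

End Sx.
Import Sx.
Module G2x.


Section Geo.
Variable R : realType.
Variables (nu delta : R) (E0 P0 : R * R).
Hypotheses (nu0 : 0 < nu) (nu1 : nu < 1) (d0 : 0 < delta).

Local Notation al := (alpha nu).
Local Notation ga := (gamma nu).
Local Notation be := (beta nu).
Ltac hyps := have n0 := nu0; have n1 := nu1; have dd0 := d0.

Lemma al_pos : 0 < al.
Proof. hyps; rewrite /alpha invr_gt0 subr_gt0 expr2; nra. Qed.
Lemma al_id : al * (1 - nu ^+ 2) = 1.
Proof. hyps; by rewrite /alpha mulVf // subr_eq0 eq_sym expr2; apply/negP => /eqP; nra. Qed.
Lemma ga_eq : ga = nu * al. Proof. by []. Qed.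
Lemma be_eq : be = nu ^+ 2 * al. Proof. by []. Qed.

Definition RC := apollo_radius nu E0 P0 + delta.
Definition cen E P := apollo_center nu E P.
Definition yv E P := psub (cen E P) (cen E0 P0).
Definition aa E P := RC - apollo_radius nu E P.
Definition GG E P := (yv E P).1 ^+ 2 + (yv E P).2 ^+ 2 - aa E P ^+ 2.
Definition zz E P := zP nu delta E0 P0 E P.

Lemma RC_pos : 0 < RC.
Proof.
hyps; rewrite /RC /apollo_radius; apply: ltr_pwDr => //.
by apply: mulr_ge0; [rewrite ga_eq; apply: mulr_ge0; [lra| apply: ltW; exact: al_pos] | exact: enorm_ge0].
Qed.

Lemma aa_eq E P : aa E P = RC - ga * enorm (psub E P).
Proof. by []. Qed.

Lemma zz_eq E P : zz E P =
  vadd (vadd (vscl RC (nrm (psub E P))) (vscl (- ga) (psub E P))) (vscl nu (yv E P)).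
Proof.
rewrite /zz /zP /vadd /vscl /nrm /= -/RC -/(yv E P) /apollo_radius.
set r := psub E P.
have [e0|ne0] := eqVneq (enorm r) 0.
  have [h1 h2] := comp_eq0 e0.
  rewrite e0 !invr0 !mulr0 !mul0r; rewrite /r /psub /= in h1 h2; rewrite h1 h2; congr pair; ring.
by congr pair; field.
Qed.

Lemma yv_diff E P E' P' : psub (yv E' P') (yv E P) =
  vadd (vscl al (psub E' E)) (vscl (- be) (psub P' P)).
Proof.
by rewrite /yv /cen /apollo_center /psub /vadd /vscl /=; congr pair; ring.
Qed.

Definition KK E P := (2 * RC / enorm (psub E P) + ga) * (1 + nu) + nu * (al + be).

Lemma zz_lip E P E' P' h : 0 < enorm (psub E P) ->
  enorm (psub E' E) <= nu * h -> enorm (psub P' P) <= h ->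
  enorm (psub (zz E' P') (zz E P)) <= KK E P * h.
Proof.
hyps; move=> rp hE hP.
have h0 : 0 <= h by apply: le_trans (enorm_ge0 _) hP.
have alp := al_pos.
have bep : 0 <= be by rewrite be_eq; apply: mulr_ge0; [apply: sqr_ge0 | lra].
have gap : 0 <= ga by rewrite ga_eq; apply: mulr_ge0; lra.
have RCp := RC_pos.
set r := psub E P; set r' := psub E' P'.
have hd : enorm (psub r' r) <= 1 * (nu * h) + 1 * h.
  have -> : psub r' r = vadd (vscl 1 (psub E' E)) (vscl (-1) (psub P' P)).
    by rewrite /r /r' /psub /vadd /vscl /=; congr pair; ring.
  by have := enorm_lin 1 (-1) hE hP; rewrite normrN normr1.
have hy : enorm (psub (yv E' P') (yv E P)) <= al * (nu * h) + be * h.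
  rewrite yv_diff; have := enorm_lin al (- be) hE hP.
  by rewrite normrN !ger0_norm //; lra.
have hn := nrm_lip r' rp.
have -> : psub (zz E' P') (zz E P) = vadd (vadd (vscl RC (psub (nrm r') (nrm r)))
    (vscl (- ga) (psub r' r))) (vscl nu (psub (yv E' P') (yv E P))).
  by rewrite !zz_eq /psub /vadd /vscl /=; congr pair; ring.
apply: le_trans (enorm_add _ _) _.
apply: le_trans (lerD (enorm_add _ _) (lexx _)) _.
rewrite !enorm_scl normrN !ger0_norm //; try lra.
rewrite /KK -/r.
set D := enorm (psub r' r) in hd hn *.
set N := enorm (psub (nrm r') (nrm r)) in hn *.
set Y := enorm (psub _ _) in hy *.
set rr := enorm r in rp hn *.
have e1 : RC * N <= RC * (2 * D / rr) by apply: ler_wpM2l; lra.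
have e2 : 2 * RC / rr * ((1 + nu) * h) = RC * (2 * ((1 + nu) * h) / rr) by field; lra.
have e3 : RC * (2 * D / rr) <= RC * (2 * ((1 + nu) * h) / rr).
  apply: ler_wpM2l; first lra.
  apply: ler_wpM2r; first by rewrite invr_ge0; lra.
  lra.
have e4 : ga * D <= ga * ((1 + nu) * h) by apply: ler_wpM2l; lra.
have e5 : nu * Y <= nu * ((al + be) * h).
  apply: ler_wpM2l; first lra.
  have : al * (nu * h) <= al * h by apply: ler_wpM2l; nra.
  lra.
have -> : (2 * RC / rr + ga) * (1 + nu) + nu * (al + be) =
   2 * RC / rr * (1 + nu) + ga * (1 + nu) + nu * (al + be) by ring.
nra.
Qed.


Definition ppv E P := vadd (yv E P) (vscl (nu * (aa E P / enorm (psub E P))) (psub E P)).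

Lemma step E P E' P' h :
  0 < enorm (psub E P) -> 0 <= aa E P ->
  dot (ppv E P) (psub E' E) <= nu * enorm (ppv E P) * h ->
  (enorm (zz E P) - 2 * KK E P * h) * h <= dot (zz E P) (psub P' P) ->
  enorm (psub E' E) <= nu * h -> enorm (psub P' P) <= h ->
  ga * (2 * enorm (psub E P) * ((1 + nu) * h) + (1 + nu) ^+ 2 * h ^+ 2)
     / (2 * enorm (psub E P)) <= aa E P ->
  GG E' P' <= GG E P + 2 * ga * h * (enorm (ppv E P) - enorm (zz E P))
     + (4 * ga * KK E P + (al + be) ^+ 2
        + aa E P * ga * (1 + nu) ^+ 2 / enorm (psub E P)) * h ^+ 2
  /\ 0 <= aa E' P'.
Proof.
hyps; move=> rp ap hW hQ hE hP hyp.
have h0 : 0 <= h by apply: le_trans (enorm_ge0 _) hP.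
have alp := al_pos.
have bep : 0 <= be by rewrite be_eq; apply: mulr_ge0; [apply: sqr_ge0 | lra].
have gap : 0 <= ga by rewrite ga_eq; apply: mulr_ge0; lra.
set r := psub E P; set r' := psub E' P'.
set d := psub r' r.
set y := yv E P; set dy := psub (yv E' P') (yv E P).
have hd : enorm d <= (1 + nu) * h.
  have -> : d = vadd (vscl 1 (psub E' E)) (vscl (-1) (psub P' P)).
    by rewrite /d /r /r' /psub /vadd /vscl /=; congr pair; ring.
  by have := enorm_lin 1 (-1) hE hP; rewrite normrN normr1; lra.
have hy : enorm dy <= (al + be) * h.
  rewrite /dy yv_diff; have := enorm_lin al (- be) hE hP.
  rewrite normrN !ger0_norm //; try lra.
  have : al * (nu * h) <= al * h by apply: ler_wpM2l; nra.
  lra.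
have hdd : d.1 ^+ 2 + d.2 ^+ 2 <= (1 + nu) ^+ 2 * h ^+ 2.
  by rewrite -exprMn -enorm_leP //; nra.
have hdy : dy.1 ^+ 2 + dy.2 ^+ 2 <= (al + be) ^+ 2 * h ^+ 2.
  by rewrite -exprMn -enorm_leP //; nra.
have hLrd : dot r d <= enorm r * ((1 + nu) * h).
  by apply: le_trans (cs r d) _; apply: ler_wpM2l => //; exact: enorm_ge0.
have := @core R (aa E P) (aa E' P') (enorm r) (enorm r') ga al nu h (KK E P)
  (enorm (ppv E P)) (enorm (zz E P)) (dot y dy) (dot r d) (d.1 ^+ 2 + d.2 ^+ 2)
  (y.1 ^+ 2 + y.2 ^+ 2) ((yv E' P').1 ^+ 2 + (yv E' P').2 ^+ 2)
  (dy.1 ^+ 2 + dy.2 ^+ 2) (dot (ppv E P) (psub E' E)) (dot (zz E P) (psub P' P))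
  (aa E P / enorm r) RC be rp (enorm_ge0 _) gap (ltW alp) h0 ap.
move=> /(_ (addr_ge0 (sqr_ge0 _) (sqr_ge0 _))).
have e1 : (yv E' P').1 ^+ 2 + (yv E' P').2 ^+ 2 =
   y.1 ^+ 2 + y.2 ^+ 2 + 2 * dot y dy + (dy.1 ^+ 2 + dy.2 ^+ 2).
  by rewrite /dy /y /dot /psub /=; ring.
have e2 : enorm r' ^+ 2 = enorm r ^+ 2 + 2 * dot r d + (d.1 ^+ 2 + d.2 ^+ 2).
  by rewrite !enorm_sq /d /dot /psub /=; ring.
move=> /(_ e1 e2 (aa_eq E P) (aa_eq E' P') erefl).
have e3 : 2 * dot y dy + 2 * ga * (aa E P / enorm r) * dot r d =
    2 * al * dot (ppv E P) (psub E' E) - 2 * ga * dot (zz E P) (psub P' P).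
  rewrite /ppv /zz /zP /y /dy /d /r /r' /yv /cen /aa /RC /apollo_center /dot
     /psub /vadd /vscl /gamma /beta /=.
  ring.
move=> /(_ e3 hW hQ).
have e4 : al * nu = ga by rewrite ga_eq mulrC.
move=> /(_ e4 hdy hdd hLrd hyp).
by rewrite /GG.
Qed.

Lemma pq_diff E P : 0 < enorm (psub E P) ->
  enorm (ppv E P) ^+ 2 - enorm (zz E P) ^+ 2 = (1 - nu ^+ 2) * GG E P.
Proof.
move=> rp.
have er := enorm_sq (psub E P).
rewrite !enorm_sq /ppv /zz /zP /GG /vadd /vscl /=.
rewrite -/(yv E P) -/RC -/(aa E P).
set a := aa E P; set y := yv E P; set r := psub E P.
set rho := enorm r in rp er *.
have -> : ((y.1 + nu * (a / rho) * r.1) ^+ 2 + (y.2 + nu * (a / rho) * r.2) ^+ 2 -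
   ((a / rho * r.1 + nu * y.1) ^+ 2 + (a / rho * r.2 + nu * y.2) ^+ 2)) =
   (1 - nu ^+ 2) * (y.1 ^+ 2 + y.2 ^+ 2 - (a / rho) ^+ 2 * (r.1 ^+ 2 + r.2 ^+ 2)) by ring.
rewrite -er; congr (_ * (_ - _)); rewrite expr_div_n divfK //.
by rewrite expf_neq0 // gt_eqF.
Qed.

End Geo.

End G2x.
Import G2x.
Module G3x.


Lemma left_close (R : realType) (f : R -> R) (t0 s c M : R) : t0 < s ->
  (forall u, t0 <= u < s -> s - u <= 1 -> f s - f u <= M * (s - u)) ->
  (forall u, t0 <= u < s -> f u <= c) -> f s <= c.
Proof.
move=> t0s hM hc; rewrite leNgt; apply/negP => cs.
pose e := f s - c.
have e0 : 0 < e by rewrite /e subr_gt0.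
pose k := Num.min (Num.min (s - t0) 1) (e / (`|M| + 1)) / 2.
have Mp : 0 < `|M| + 1 by have := normr_ge0 M; lra.
have k0 : 0 < k.
  rewrite /k; apply: divr_gt0 => //; rewrite !lt_min; apply/andP; split.
    by apply/andP; split; lra.
  exact: divr_gt0.
have k1 : k <= (s - t0) / 2 by rewrite /k ler_pM2r // !ge_min lexx.
have k2 : k <= 1 / 2 by rewrite /k ler_pM2r // !ge_min lexx orbT.
have k3 : k <= e / (`|M| + 1) / 2 by rewrite /k ler_pM2r // ge_min lexx orbT.
have hu : t0 <= s - k < s by apply/andP; split; lra.
have H1 := hM (s - k) hu ltac:(lra).
have H2 := hc (s - k) hu.
have H3 : M * k <= `|M| * k by apply: ler_wpM2r; [lra | exact: ler_norm].
have H4 : `|M| * k < e.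
  have H5 : (`|M| + 1) * k <= (`|M| + 1) * (e / (`|M| + 1) / 2) by apply: ler_wpM2l; lra.
  have E5 : (`|M| + 1) * (e / (`|M| + 1) / 2) = e / 2.
    by field; rewrite gt_eqF.
  rewrite E5 in H5.
  have := normr_ge0 M; lra.
have E1 : s - (s - k) = k by ring.
rewrite E1 in H1.
rewrite /e in H4; lra.
Qed.

Section Traj.
Variable R : realType.
Variables (nu delta t0 T : R) (xE xP vE : R -> R * R).
Hypotheses (nu0 : 0 < nu) (nu1 : nu < 1) (d0 : 0 < delta).
Hypotheses (mE1 : measurable_fun [set: R] (fun s => (vE s).1))
  (mE2 : measurable_fun [set: R] (fun s => (vE s).2))
  (vEb : forall s, enorm (vE s) <= nu)
  (trE : forall t, t0 <= t <= T -> integral_traj xE vE t0 t).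
Definition vPt s := vP_law nu delta (xE t0) (xP t0) (xE s) (xP s).
Hypotheses (mP1 : measurable_fun `[t0, T] (fun s => (vPt s).1))
  (mP2 : measurable_fun `[t0, T] (fun s => (vPt s).2))
  (trP : forall t, t0 <= t <= T -> integral_traj xP vPt t0 t)
  (nocap : forall s, t0 <= s < T -> xE s <> xP s).

Local Notation al := (alpha nu).
Local Notation ga := (gamma nu).
Local Notation be := (beta nu).
Local Notation E0 := (xE t0).
Local Notation P0 := (xP t0).
Definition gt s := GG R nu delta E0 P0 (xE s) (xP s).
Definition At s := aa R nu delta E0 P0 (xE s) (xP s).
Ltac hyps := have n0 := nu0; have n1 := nu1; have dd0 := d0.

Lemma vPt_nrm s : vPt s = nrm (zz R nu delta E0 P0 (xE s) (xP s)).
Proof. by []. Qed.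

Lemma vPt_bnd s : enorm (vPt s) <= 1.
Proof. by rewrite vPt_nrm; exact: enorm_nrm. Qed.

Lemma mEu u : measurable_fun `[t0, u] (fun s => (vE s).1) /\
              measurable_fun `[t0, u] (fun s => (vE s).2).
Proof.
split; apply: (measurable_funS measurableT) => //.
Qed.

Lemma mPu u : u <= T -> measurable_fun `[t0, u] (fun s => (vPt s).1) /\
              measurable_fun `[t0, u] (fun s => (vPt s).2).
Proof.
move=> uT; have sub : `[t0, u] `<=` `[t0, T] by apply: subset_itvl; rewrite bnd_simp.
by split; apply: (measurable_funS _ sub) => //; exact: measurable_itv.
Qed.

Lemma rho_pos s : t0 <= s < T -> 0 < enorm (psub (xE s) (xP s)).
Proof.
move=> hs; rewrite lt_def enorm_ge0 andbT enorm_eq0.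
apply/eqP => h; have := nocap s hs; apply.
move: h; case: (xE s) => a b; case: (xP s) => c d; rewrite /psub /= => -[h1 h2].
by congr pair; apply/eqP; rewrite -subr_eq0; apply/eqP.
Qed.

Lemma KK_ge0 E P : 0 < enorm (psub E P) -> 0 <= KK R nu delta E0 P0 E P.
Proof.
hyps; move=> rp.
have alp := @al_pos R nu delta nu0 nu1 d0.
have bep : 0 <= be by rewrite /beta; apply: mulr_ge0; [apply: sqr_ge0 | lra].
have gap : 0 <= ga by rewrite /gamma; apply: mulr_ge0; lra.
have RCp := @RC_pos R nu delta E0 P0 nu0 nu1 d0.
rewrite /KK; apply: addr_ge0; apply: mulr_ge0; try lra.
apply: addr_ge0 => //; apply: mulr_ge0; last by rewrite invr_ge0; lra.
lra.
Qed.

Lemma local s : t0 <= s < T -> gt s < 0 -> 0 <= At s ->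
  exists2 eta, 0 < eta & forall u, s < u <= T -> u - s < eta -> gt u < gt s /\ 0 <= At u.
Proof.
hyps; move=> hs gneg aps.
have [t0s sT] := andP hs.
have rp := rho_pos s hs.
set E := xE s; set P := xP s.
set rho := enorm (psub E P).
have rp' : 0 < rho by exact: rp.
have alp := @al_pos R nu delta nu0 nu1 d0.
have bep : 0 <= be by rewrite /beta; apply: mulr_ge0; [apply: sqr_ge0 | lra].
have gap : 0 < ga by rewrite /gamma; apply: mulr_gt0; lra.
have ga2 : 0 <= gt s + At s ^+ 2 by rewrite /gt /GG /At subrK addr_ge0 // sqr_ge0.
set a := At s in aps ga2 *.
have apos : 0 < a.
  rewrite lt_def aps andbT; apply/eqP => a0.
  by rewrite a0 expr2 mul0r addr0 in ga2; lra.
set np := enorm (ppv R nu delta E0 P0 E P).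
set nq := enorm (zz R nu delta E0 P0 E P).
have pq := @pq_diff R nu delta E0 P0 E P rp; rewrite -/np -/nq -/(gt s) in pq.
have npq : np < nq.
  have h1 : np ^+ 2 < nq ^+ 2.
    have : 0 < 1 - nu ^+ 2 by rewrite subr_gt0 expr2; nra.
    nra.
  have hnp : 0 <= np by exact: enorm_ge0.
  have hnq : 0 <= nq by exact: enorm_ge0.
  by rewrite -(ltr_pXn2r (n := 2)) ?nnegrE.
set K := KK R nu delta E0 P0 E P.
have K0 : 0 <= K by exact: KK_ge0.
set C := 4 * ga * K + (al + be) ^+ 2 + a * ga * (1 + nu) ^+ 2 / rho.
have C0 : 0 <= C.
  rewrite /C; apply: addr_ge0; [apply: addr_ge0|].
  - by apply: mulr_ge0 => //; apply: mulr_ge0; lra.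
  - exact: sqr_ge0.
  - apply: mulr_ge0; last by rewrite invr_ge0; lra.
    by apply: mulr_ge0; [apply: mulr_ge0; lra| apply: sqr_ge0].
set L := ga * (2 * rho * (1 + nu) + (1 + nu) ^+ 2) / (2 * rho).
have L0 : 0 <= L.
  rewrite /L; apply: mulr_ge0; last by rewrite invr_ge0; lra.
  apply: mulr_ge0; first lra.
  by apply: addr_ge0; [apply: mulr_ge0; lra | apply: sqr_ge0].
set eta := Num.min (Num.min 1 (a / (L + 1))) (ga * (nq - np) / (C + 1)).
have eta1 : eta <= 1 by rewrite /eta !ge_min lexx.
have eta2 : eta <= a / (L + 1) by rewrite /eta !ge_min lexx orbT.
have eta3 : eta <= ga * (nq - np) / (C + 1) by rewrite /eta ge_min lexx orbT.
exists eta.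
  rewrite /eta !lt_min ltr01 /=; apply/andP; split.
    by apply: divr_gt0; lra.
  by apply: divr_gt0; [apply: mulr_gt0; lra| lra].
move=> u /andP[su uT] hu.
set h := u - s.
have eh : h = u - s by [].
have h0 : 0 < h by rewrite /h subr_gt0.
have t0u : t0 <= u by apply: le_trans t0s (ltW su).
have [mE1u mE2u] := mEu u.
have [mP1u mP2u] := mPu u uT.
have trEs := trE s (ltac:(by rewrite t0s (ltW sT))).
have trEu := trE u (ltac:(by rewrite t0u uT)).
have trPs := trP s (ltac:(by rewrite t0s (ltW sT))).
have trPu := trP u (ltac:(by rewrite t0u uT)).
have hE : enorm (psub (xE u) E) <= nu * h.
  apply: (lip t0s su trEs trEu mE1u mE2u) => //; last lra.
have hP : enorm (psub (xP u) P) <= h.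
  rewrite -[h]mul1r.
  by apply: (lip t0s su trPs trPu mP1u mP2u) => //; move=> y _; exact: vPt_bnd.
have hW : dot (ppv R nu delta E0 P0 E P) (psub (xE u) E) <= nu * np * h.
  apply: (incr_dot t0s su trEs trEu mE1u mE2u (B := nu)) => //.
  move=> y _; apply: le_trans (cs _ _) _; rewrite -/np mulrC.
  by apply: ler_wpM2r; [exact: enorm_ge0 | exact: vEb].
have hQ : (nq - 2 * K * h) * h <= dot (zz R nu delta E0 P0 E P) (psub (xP u) P).
  apply: (incr_dot_ge t0s su trPs trPu mP1u mP2u (B := 1)).
    by move=> y _; exact: vPt_bnd.
  move=> y /andP[sy yu].
  rewrite vPt_nrm; apply: le_trans (dot_nrm_ge _ _).
  rewrite -/nq psub_sym.
  have yT : y <= T by apply: le_trans yu uT.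
  have t0y : t0 <= y by apply: le_trans t0s (ltW sy).
  have trEy := trE y (ltac:(by rewrite t0y yT)).
  have trPy := trP y (ltac:(by rewrite t0y yT)).
  have [mE1y mE2y] := mEu y.
  have [mP1y mP2y] := mPu y yT.
  have hEy : enorm (psub (xE y) E) <= nu * (y - s).
    by apply: (lip t0s sy trEs trEy mE1y mE2y) => //; lra.
  have hPy : enorm (psub (xP y) P) <= y - s.
    rewrite -[y - s]mul1r.
    by apply: (lip t0s sy trPs trPy mP1y mP2y) => //; move=> z _; exact: vPt_bnd.
  have := @zz_lip R nu delta E0 P0 nu0 nu1 d0 _ _ _ _ _ rp hEy hPy; rewrite -/K => hz.
  have : K * (y - s) <= K * h by apply: ler_wpM2l => //; rewrite /h; lra.
  lra.
have hyp : ga * (2 * rho * ((1 + nu) * h) + (1 + nu) ^+ 2 * h ^+ 2) / (2 * rho) <= a.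
  have hle1 : h <= 1 by lra.
  have hh : h ^+ 2 <= h by rewrite expr2; nra.
  have e1 : 2 * rho * ((1 + nu) * h) + (1 + nu) ^+ 2 * h ^+ 2 <=
            (2 * rho * (1 + nu) + (1 + nu) ^+ 2) * h.
    have : (1 + nu) ^+ 2 * h ^+ 2 <= (1 + nu) ^+ 2 * h by apply: ler_wpM2l => //; exact: sqr_ge0.
    lra.
  have e2 : ga * (2 * rho * ((1 + nu) * h) + (1 + nu) ^+ 2 * h ^+ 2) / (2 * rho) <= L * h.
    have -> : L * h = ga * ((2 * rho * (1 + nu) + (1 + nu) ^+ 2) * h) / (2 * rho) by rewrite /L; ring.
    apply: ler_wpM2r; first by rewrite invr_ge0; lra.
    by apply: ler_wpM2l; lra.
  have e3 : (L + 1) * h <= a.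
    have : (L + 1) * h <= (L + 1) * (a / (L + 1)) by apply: ler_wpM2l; lra.
    have L1 : L + 1 != 0 by rewrite gt_eqF //; lra.
    have -> : (L + 1) * (a / (L + 1)) = a by rewrite [X in X = _]mulrC divfK.
    lra.
  nra.
have [Hg Ha] := @step R nu delta E0 P0 nu0 nu1 d0 _ _ _ _ _ rp aps hW hQ hE hP hyp.
split => //.
rewrite -/(gt u) -/(gt s) -/np -/nq -/a -/rho -/C -/K in Hg.
have : C * h < ga * (nq - np).
  have : (C + 1) * h < (C + 1) * (ga * (nq - np) / (C + 1)).
    by rewrite ltr_pM2l; lra.
  have C1 : C + 1 != 0 by rewrite gt_eqF //; lra.
  have -> : (C + 1) * (ga * (nq - np) / (C + 1)) = ga * (nq - np) by rewrite [X in X = _]mulrC divfK.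
  lra.
nra.
Qed.

Lemma back_lip s u : t0 <= u -> u < s -> s <= T ->
  enorm (psub (xE s) (xE u)) <= nu * (s - u) /\ enorm (psub (xP s) (xP u)) <= s - u.
Proof.
hyps; move=> t0u us sT.
have t0s : t0 <= s by apply: le_trans t0u (ltW us).
have uT : u <= T by apply: le_trans (ltW us) sT.
have [mE1s mE2s] := mEu s.
have [mP1s mP2s] := mPu s sT.
have trEs := trE s ltac:(by rewrite t0s sT).
have trEu := trE u ltac:(by rewrite t0u uT).
have trPs := trP s ltac:(by rewrite t0s sT).
have trPu := trP u ltac:(by rewrite t0u uT).
split.
  by apply: (lip t0u us trEu trEs mE1s mE2s) => //; lra.
rewrite -[s - u]mul1r.
by apply: (lip t0u us trPu trPs mP1s mP2s) => //; move=> z _; exact: vPt_bnd.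
Qed.

Lemma At_lip s u : t0 <= u -> u < s -> s <= T ->
  `|At u - At s| <= ga * (1 + nu) * (s - u).
Proof.
hyps; move=> t0u us sT.
have [hE hP] := back_lip s u t0u us sT.
have gap : 0 <= ga by rewrite /gamma; apply: mulr_ge0; [lra | apply: ltW; exact: (@al_pos R nu delta nu0 nu1 d0)].
rewrite /At !aa_eq.
have -> : RC R nu delta E0 P0 - ga * enorm (psub (xE u) (xP u)) -
   (RC R nu delta E0 P0 - ga * enorm (psub (xE s) (xP s))) =
   ga * (enorm (psub (xE s) (xP s)) - enorm (psub (xE u) (xP u))) by ring.
rewrite normrM (ger0_norm gap) -mulrA; apply: ler_wpM2l => //.
have hd : enorm (psub (psub (xE s) (xP s)) (psub (xE u) (xP u))) <= (1 + nu) * (s - u).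
  have -> : psub (psub (xE s) (xP s)) (psub (xE u) (xP u)) =
     vadd (vscl 1 (psub (xE s) (xE u))) (vscl (-1) (psub (xP s) (xP u))).
    by rewrite /psub /vadd /vscl /=; congr pair; ring.
  by have := enorm_lin 1 (-1) hE hP; rewrite normrN normr1; lra.
rewrite ler_norml; apply/andP; split.
  have := rev_tri (psub (xE u) (xP u)) (psub (xE s) (xP s)).
  rewrite (psub_sym (psub (xE u) (xP u))); lra.
have := rev_tri (psub (xE s) (xP s)) (psub (xE u) (xP u)); lra.
Qed.

Definition Mg s := 2 * enorm (yv R nu E0 P0 (xE s) (xP s)) * (al + be)
  + 2 * `|At s| * (ga * (1 + nu)) + (ga * (1 + nu)) ^+ 2.

Lemma gt_lip s u : t0 <= u -> u < s -> s <= T -> s - u <= 1 ->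
  gt s - gt u <= Mg s * (s - u).
Proof.
hyps; move=> t0u us sT k1.
have [hE hP] := back_lip s u t0u us sT.
have hA := At_lip s u t0u us sT.
have alp := @al_pos R nu delta nu0 nu1 d0.
have bep : 0 <= be by rewrite /beta; apply: mulr_ge0; [apply: sqr_ge0 | lra].
have gap : 0 <= ga by rewrite /gamma; apply: mulr_ge0; lra.
set ys := yv R nu E0 P0 (xE s) (xP s).
set yu := yv R nu E0 P0 (xE u) (xP u).
set d := psub ys yu.
have hd : enorm d <= (al + be) * (s - u).
  rewrite /d /ys /yu yv_diff; have := enorm_lin al (- be) hE hP.
  rewrite normrN !ger0_norm //; try lra.
  have : al * (nu * (s - u)) <= al * (s - u) by apply: ler_wpM2l; nra.
  lra.
have ey : ys.1 ^+ 2 + ys.2 ^+ 2 - (yu.1 ^+ 2 + yu.2 ^+ 2) =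
    2 * dot ys d - (d.1 ^+ 2 + d.2 ^+ 2).
  by rewrite /d /dot /psub /=; ring.
have hy1 : dot ys d <= enorm ys * enorm d by exact: cs.
have hy2 : enorm ys * enorm d <= enorm ys * ((al + be) * (s - u)).
  by apply: ler_wpM2l => //; exact: enorm_ge0.
have hd0 : 0 <= d.1 ^+ 2 + d.2 ^+ 2 by rewrite addr_ge0 // sqr_ge0.
set as_ := At s; set au := At u.
have ea : au ^+ 2 - as_ ^+ 2 = 2 * as_ * (au - as_) + (au - as_) ^+ 2 by ring.
have ha1 : as_ * (au - as_) <= `|as_| * (ga * (1 + nu) * (s - u)).
  apply: le_trans (ler_norm _) _; rewrite normrM; apply: ler_wpM2l => //.
have ha2 : (au - as_) ^+ 2 <= (ga * (1 + nu)) ^+ 2 * (s - u).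
  have h0 : 0 <= ga * (1 + nu) * (s - u) by apply: mulr_ge0; [apply: mulr_ge0; lra | lra].
  have : (au - as_) ^+ 2 <= (ga * (1 + nu) * (s - u)) ^+ 2.
    have hA' : `|au - as_| <= ga * (1 + nu) * (s - u) := hA.
    move: hA'; rewrite ler_norml => /andP[hA1 hA2]; rewrite !expr2; nra.
  have : (ga * (1 + nu) * (s - u)) ^+ 2 <= (ga * (1 + nu)) ^+ 2 * (s - u).
    rewrite exprMn; apply: ler_wpM2l; first exact: sqr_ge0.
    rewrite expr2; nra.
  lra.
have -> : gt s - gt u = (ys.1 ^+ 2 + ys.2 ^+ 2 - (yu.1 ^+ 2 + yu.2 ^+ 2)) + (au ^+ 2 - as_ ^+ 2).
  by rewrite /gt /GG -/ys -/yu /as_ /au /At; ring.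
rewrite ey ea /Mg -/ys -/as_.
have -> : (2 * enorm ys * (al + be) + 2 * `|as_| * (ga * (1 + nu)) + (ga * (1 + nu)) ^+ 2) * (s - u)
  = 2 * (enorm ys * ((al + be) * (s - u))) + 2 * (`|as_| * (ga * (1 + nu) * (s - u)))
    + (ga * (1 + nu)) ^+ 2 * (s - u) by ring.
lra.
Qed.

Lemma main_sec t : t0 < t <= T ->
  enorm (psub (xE t) (xP t)) < enorm (psub (xE t0) (xP t0)).
Proof.
hyps; move=> /andP[t0t tT].
have t0T : t0 < T by apply: lt_le_trans t0t tT.
have alp := @al_pos R nu delta nu0 nu1 d0.
have gap : 0 < ga by rewrite /gamma; apply: mulr_gt0; lra.
have A0 : At t0 = delta.
  by rewrite /At /aa /RC; ring.
have g0 : gt t0 = - delta ^+ 2.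
  rewrite /gt /GG -/(At t0) A0 /yv /psub !subrr.
  by rewrite expr2 mul0r addr0 sub0r.
have [eta eta0 Heta] := local t0 ltac:(by rewrite lexx t0T) ltac:(rewrite g0; 
   rewrite oppr_lt0 expr2; nra) ltac:(rewrite A0; lra).
have dsq : 0 <= delta ^+ 2 := sqr_ge0 _.
pose u1 := t0 + Num.min eta (t - t0) / 2.
have m1 : Num.min eta (t - t0) <= eta by rewrite ge_min lexx.
have m2 : Num.min eta (t - t0) <= t - t0 by rewrite ge_min lexx orbT.
have m0 : 0 < Num.min eta (t - t0) by rewrite lt_min eta0 /= subr_gt0.
have u1t : u1 <= t by rewrite /u1; lra.
have t0u1 : t0 < u1 by rewrite /u1; lra.
have [g1 a1] := Heta u1 ltac:(by rewrite t0u1 /=; apply: le_trans u1t tT) ltac:(rewrite /u1; lra).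
pose Pr x := gt x <= gt u1 /\ 0 <= At x.
have HP : Pr t.
  apply: (@real_ind R u1 T Pr); last by rewrite u1t tT.
  - by apply: le_trans u1t tT.
  - by split.
  - move=> s /andP[u1s sT] [gs as_].
    have t0s : t0 <= s by apply: le_trans (ltW t0u1) u1s.
    have [e e0 He] := local s ltac:(by rewrite t0s sT) ltac:(lra) as_.
    exists e => // u hu hue; have [h1 h2] := He u hu hue; split => //; lra.
  - move=> s /andP[u1s sT] H; split.
      apply: (@left_close R gt u1 s (gt u1) (Mg s)) => //.
        move=> u /andP[u1u us] k1; apply: gt_lip => //.
        by apply: le_trans (ltW t0u1) u1u.
      by move=> u hu; have [] := H u hu.
    have : - At s <= 0.
      apply: (@left_close R (fun x => - At x) u1 s 0 (ga * (1 + nu))) => //.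
        move=> u /andP[u1u us] k1.
        have t0u : t0 <= u by apply: le_trans (ltW t0u1) u1u.
        have := At_lip s u t0u us sT; rewrite ler_norml => /andP[_ h]; lra.
      by move=> u hu; have [_ h] := H u hu; lra.
    lra.
case: HP => gt_t at_t.
have gtt : gt t < - delta ^+ 2 by lra.
have ga2 : 0 <= gt t + At t ^+ 2 by rewrite /gt /GG /At subrK addr_ge0 // sqr_ge0.
have Ad : delta < At t.
  have : delta ^+ 2 < At t ^+ 2 by lra.
  by rewrite ltr_pXn2r // ?nnegrE; lra.
move: Ad; rewrite /At aa_eq /RC /apollo_radius -/ga.
have h := enorm_ge0 (psub (xE t) (xP t)).
move=> H.
have : ga * enorm (psub (xE t) (xP t)) < ga * enorm (psub E0 P0) by lra.
by rewrite ltr_pM2l.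
Qed.

End Traj.

End G3x.
Import G3x.

Theorem lemma1 (R : realType) (nu delta t0 T : R) (xE xP vE : R -> R * R) :
  0 < nu -> nu < 1 -> 0 < delta ->
  xE t0 <> xP t0 ->
  (* admissible evader control: measurable, ||v_E|| <= nu *)
  measurable_fun [set: R] (fun s => (vE s).1) ->
  measurable_fun [set: R] (fun s => (vE s).2) ->
  (forall s, enorm (vE s) <= nu) ->
  (* evader dynamics on [t0, T] *)
  (forall t, t0 <= t <= T -> integral_traj xE vE t0 t) ->
  (* pursuer dynamics on [t0, T] under the law v_P = z_P / ||z_P|| *)
  let vP := fun s => vP_law nu delta (xE t0) (xP t0) (xE s) (xP s) in
  measurable_fun `[t0, T] (fun s => (vP s).1) ->
  measurable_fun `[t0, T] (fun s => (vP s).2) ->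
  (forall t, t0 <= t <= T -> integral_traj xP vP t0 t) ->
  (* no capture strictly before T *)
  (forall s, t0 <= s < T -> xE s <> xP s) ->
  forall t, t0 < t <= T ->
    enorm (psub (xE t) (xP t)) < enorm (psub (xE t0) (xP t0)) /\
    (forall rho : R, enorm (psub (xE t0) (xP t0)) <= rho ->
       enorm (psub (xE t) (xP t)) <= rho).

Proof.
move=> nu0 nu1 d0 neq mE1 mE2 vEb trE vP mP1 mP2 trP nocap t ht.
have H := @main_sec R nu delta t0 T xE xP vE nu0 nu1 d0 mE1 mE2 vEb trE mP1 mP2 trP nocap t ht.
split => // rho hr; apply: le_trans hr; exact: ltW.
Qed.
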